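(* Let $G=(G_{ij})_{1\le i,j\le n}$ be a real symmetric matrix and $f\in\{1,\dots,n\}$ such that $G_{ff}=0$, $G_{ij}=0$ whenever $i<f<j$, and the principal submatrices $G'$ on $\{1,\dots,f-1\}$ and $G''$ on $\{f+1,\dots,n\}$ are Gram matrices of simple roots of semisimple Lie algebras $\mathfrak g',\mathfrak g''$ (hence positive definite) whose long roots have squared length $2d'$ resp. $2d''$. For $r',r''\in\mathbb R$ define $m^S_{ij}=r'G_{ij}$ if $i,j\le f$ and $(i,j)\ne(f,f)$; $m^S_{ij}=r''G_{ij}$ if $i,j\ge f$ and $(i,j)\neq(f,f)$; $m^S_{ij}=0$ if $i<f<j$ or $j<f<i$; $m^S_{ff}=1$. If $0<r'\le\frac1{2d'}$, $0<r''\le\frac1{2d''}$ and $\det(m^S)>0$, then $m^S$ is positive definite and $m^S_{ii}\le1$ for all $i$ (so smallness holds and all Nichols algebra relations of $\mathcal B(q)$, $q_{ij}=e^{i\pi m^S_{ij}}$, hold for the corresponding screening operators).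
   Context: This is the Gram matrix in the standard chamber associated to a basic classical Lie superalgebra with a single fermionic simple root $\alpha_f$; $G_{ij}=(\alpha_i,\alpha_j)$. The consequence uses the criterion: positive definiteness and $m_{ii}\le1$ imply that all relations of the diagonal Nichols algebra hold for the Heisenberg screening operators. *)

(* Defs.v *)
(* Indices 1..n of the paper are 'I_n (0-based) here. *)
From HB Require Import structures.
From mathcomp Require Import all_boot all_order all_algebra.
Set Implicit Arguments. Unset Strict Implicit. Unset Printing Implicit Defensive.
Import Order.TTheory GRing.Theory Num.Theory.
Local Open Scope ring_scope.

Definition posdef (R : realFieldType) (k : nat) (M : 'M[R]_k) : Prop :=
  forall x : 'cV[R]_k, x != 0 -> 0 < (x^T *m M *m x) 0 0.

(* Gram matrix of the simple roots of a (possibly zero) semisimple Lie algebra,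
   i.e. a symmetrised Cartan matrix of finite type: symmetric, positive
   definite, and the Cartan integers 2 (a_i,a_j)/(a_i,a_i), i <> j, are
   nonpositive integers.  "Long roots have squared length 2d": the maximal
   squared length of a (simple) root is 2d. *)
Definition simple_root_gram (R : realFieldType) (k : nat) (M : 'M[R]_k) (d : R) : Prop :=
  [/\ M^T = M, posdef M,
      (forall i j : 'I_k, i != j -> exists c : nat, 2 * M i j / M i i = - c%:R),
      (forall i : 'I_k, M i i <= 2 * d) &
      (0 < k)%N -> exists i : 'I_k, M i i = 2 * d].

Lemma lo_idx_proof (n : nat) (f : 'I_n) (i : 'I_f) : (i < n)%N.
Proof. exact: ltn_trans (ltn_ord i) (ltn_ord f). Qed.

Lemma hi_idx_proof (n : nat) (f : 'I_n) (i : 'I_(n - f.+1)) : (f.+1 + i < n)%N.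
Proof. by rewrite -ltn_subRL. Qed.

Definition lo_idx (n : nat) (f : 'I_n) (i : 'I_f) : 'I_n := Ordinal (lo_idx_proof i).
Definition hi_idx (n : nat) (f : 'I_n) (i : 'I_(n - f.+1)) : 'I_n := Ordinal (hi_idx_proof i).

Definition sub_lo (R : realFieldType) (n : nat) (G : 'M[R]_n) (f : 'I_n) : 'M[R]_f :=
  \matrix_(i, j) G (lo_idx i) (lo_idx j).
Definition sub_hi (R : realFieldType) (n : nat) (G : 'M[R]_n) (f : 'I_n) : 'M[R]_(n - f.+1) :=
  \matrix_(i, j) G (hi_idx i) (hi_idx j).

Definition mS (R : realFieldType) (n : nat) (G : 'M[R]_n) (f : 'I_n) (r1 r2 : R) : 'M[R]_n :=
  \matrix_(i, j)
    if (i == f) && (j == f) then 1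
    else if ((i <= f)%N && (j <= f)%N) then r1 * G i j
    else if ((f <= i)%N && (f <= j)%N) then r2 * G i j
    else 0.

(* Main.v *)
Require Import Defs.
From HB Require Import structures.
From mathcomp Require Import all_boot all_order all_algebra.
From mathcomp Require Import zify ring lra.
Import Order.TTheory GRing.Theory Num.Theory.
Set Implicit Arguments. Unset Strict Implicit. Unset Printing Implicit Defensive.
Local Open Scope ring_scope.

Section Aux.
Variable R : realFieldType.

Definition qf k (M : 'M[R]_k) (x : 'cV[R]_k) : R := (x^T *m M *m x) 0 0.

Lemma trD k (x y : 'cV[R]_k) (a : R) : (a *: x + y)^T = a *: x^T + y^T.
Proof. by apply/matrixP => i j; rewrite !mxE. Qed.

Lemma qf_pert k (M : 'M[R]_k) f t x :
  qf (M + t *: delta_mx f f) x = qf M x + t * (x f 0) ^+ 2.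
Proof.
rewrite /qf mulmxDr mulmxDl -scalemxAr -scalemxAl [in LHS]mxE [X in _ + X]mxE.
congr (_ + t * _).
rewrite -(mul_delta_mx (0 : 'I_1)) mulmxA -colE -mulmxA -rowE !mxE big_ord1 !mxE.
by rewrite expr2.
Qed.

Lemma det_pert k (M : 'M[R]_k) f t :
  \det (M + t *: delta_mx f f) = \det M + t * \det (row' f (col' f M)).
Proof.
rewrite (expand_det_row _ f) (expand_det_row M f).
have Hc : forall j, cofactor (M + t *: delta_mx f f) f j = cofactor M f j.
  move=> j; rewrite /cofactor; congr (_ * \det _).
  apply/matrixP => a b; rewrite !mxE eq_sym (negbTE (neq_lift f a)) /=.
  by rewrite mulr0 addr0.
under eq_bigr do rewrite Hc !mxE eqxx /= mulrDl.
rewrite big_split /=; congr (_ + _).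
rewrite (bigD1 f) //= eqxx mulr1 big1 ?addr0.
  by rewrite /cofactor -signr_odd oddD addbb expr0 mul1r.
by move=> j /negbTE ->; rewrite mulr0 mul0r.
Qed.

Definition Pm k (f : 'I_k.+1) : 'M[R]_(k.+1, k) := col' f 1%:M.

Lemma PtM k f m (X : 'M[R]_(k.+1, m)) : (Pm f)^T *m X = row' f X.
Proof.
apply/matrixP => i j; rewrite !mxE (bigD1 (lift f i)) //= !mxE eqxx mul1r.
rewrite big1 ?addr0 // => a ha; rewrite !mxE.
by rewrite (negbTE ha) mul0r.
Qed.

Lemma MP k f m (X : 'M[R]_(m, k.+1)) : X *m Pm f = col' f X.
Proof.
apply/matrixP => i j; rewrite !mxE (bigD1 (lift f j)) //= !mxE eqxx mulr1.
rewrite big1 ?addr0 // => a /negbTE ha; rewrite !mxE ha mulr0 //.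
Qed.

Lemma PtP k (f : 'I_k.+1) : (Pm f)^T *m Pm f = 1%:M.
Proof.
rewrite PtM; apply/matrixP => i j; rewrite !mxE (inj_eq (@lift_inj _ f)).
by [].
Qed.

Lemma minorE k (M : 'M[R]_k.+1) f : row' f (col' f M) = (Pm f)^T *m M *m Pm f.
Proof. by rewrite -mulmxA MP PtM. Qed.

Lemma qf_minor k (M : 'M[R]_k.+1) f y : qf (row' f (col' f M)) y = qf M (Pm f *m y).
Proof. by rewrite /qf minorE trmx_mul !mulmxA. Qed.

Lemma Py_neq0 k (f : 'I_k.+1) (y : 'cV[R]_k) : y != 0 -> Pm f *m y != 0.
Proof.
apply: contra => /eqP H; apply/eqP.
by rewrite -[y]mul1mx -(PtP f) -mulmxA H mulmx0.
Qed.

Lemma Py_f k (f : 'I_k.+1) (y : 'cV[R]_k) : (Pm f *m y) f 0 = 0.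
Proof.
rewrite !mxE big1 // => j _; rewrite !mxE (negbTE (neq_lift f j)) /=.
by rewrite mul0r.
Qed.

Lemma Px_id k (f : 'I_k.+1) (x : 'cV[R]_k.+1) : x f 0 = 0 -> Pm f *m ((Pm f)^T *m x) = x.
Proof.
move=> xf; apply/eqP; rewrite -subr_eq0; apply/eqP.
set d := _ - _.
have h1 : (Pm f)^T *m d = 0.
  by rewrite /d mulmxBr !mulmxA PtP mul1mx subrr.
have h2 : d f 0 = 0.
  by rewrite /d mxE Py_f mxE xf oppr0 addr0.
apply/matrixP => i j; rewrite (ord1 j) [RHS]mxE.
case: (unliftP f i) => [a ->|->]; last exact: h2.
by have := congr1 (fun A : 'M[R]_(k,1) => A a 0) h1; rewrite PtM !mxE; apply.
Qed.

Definition posdefb k (M : 'M[R]_k) := forall x, x != 0 -> 0 < qf M x.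

Lemma qf_ge0 k (M : 'M[R]_k) x : posdef M -> 0 <= qf M x.
Proof.
move=> pM; have [->|nz] := eqVneq x 0.
  by rewrite /qf mulmx0 mxE.
exact/ltW/pM.
Qed.

Lemma posdef_det k (M : 'M[R]_k) : posdef M -> 0 < \det M.
Proof.
elim: k M => [|k IH] M pM; first by rewrite det_mx00.
have pm : posdef (row' 0 (col' 0 M)).
  by move=> y y0; rewrite -/(qf _ _) qf_minor; apply/pM/Py_neq0.
have c0 := IH _ pm.
rewrite ltNge; apply/negP => dle.
set c := \det (row' 0 (col' 0 M)) in c0.
set t0 := - \det M / c.
have t0ge : 0 <= t0 by rewrite /t0 mulNr oppr_ge0 mulr_le0_ge0 // invr_ge0 ltW.
have : \det (M + t0 *: delta_mx 0 0) == 0.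
  by rewrite det_pert -/c /t0 mulNr mulNr divfK ?subrr // gt_eqF.
case/det0P => v v0 vN.
have : qf (M + t0 *: delta_mx 0 0) v^T = 0 by rewrite /qf trmxK vN mul0mx mxE.
rewrite qf_pert => h.
have := pM v^T; rewrite trmx_eq0 => /(_ v0); rewrite -/(qf _ _).
have : 0 <= t0 * (v^T 0 0) ^+ 2 by rewrite mulr_ge0 // sqr_ge0.
move: h; set q := qf M v^T; set s := t0 * _; lra.
Qed.

Lemma posdef_of_minor k (M : 'M[R]_k.+1) f :
  M^T = M -> posdef (row' f (col' f M)) -> 0 < \det M -> posdef M.
Proof.
move=> MT pm dM.
have c0 := posdef_det pm.
set c := \det (row' f (col' f M)) in c0.
set t0 := - \det M / c.
have t0lt : t0 < 0 by rewrite /t0 mulNr oppr_lt0 divr_gt0.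
set N := M + t0 *: delta_mx f f.
have NT : N^T = N.
  apply/matrixP => i j; rewrite /N !mxE andbC; congr (_ + _); by rewrite -{1}MT mxE.
have : \det N == 0.
  by rewrite det_pert -/c /t0 mulNr mulNr divfK ?subrr // gt_eqF.
case/det0P => v v0 vN.
set z := v^T.
have Nz : N *m z = 0 by rewrite /z -NT -trmx_mul vN trmx0.
have z0 : z != 0 by rewrite /z trmx_eq0.
have qNz : forall a w, qf N (a *: z + w) = qf N w.
  move=> a w; rewrite /qf trD -!mulmxA [N *m _]mulmxDr -scalemxAr Nz scaler0 add0r.
  rewrite mulmxDl -scalemxAl !mulmxA -[z^T *m N]trmxK trmx_mul trmxK NT Nz trmx0.
  by rewrite mul0mx scaler0 add0r.
have zf : z f 0 != 0.
  apply/eqP => zf.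
  have : qf N z = 0 by rewrite /qf -mulmxA Nz mulmx0 mxE.
  rewrite /N qf_pert zf expr0n /= mulr0 addr0 -(Px_id zf) -qf_minor => h.
  have : (Pm f)^T *m z != 0.
    by apply: contra z0 => /eqP H; rewrite -(Px_id zf) H mulmx0.
  by move/pm; rewrite -/(qf _ _) -h ltxx.
move=> x x0; rewrite -/(qf _ _).
set a := x f 0 / z f 0.
set w := x - a *: z.
have wf : w f 0 = 0.
  have vz : v 0 f = z f 0 by rewrite mxE.
  by rewrite /w !mxE /a vz divfK // subrr.
have xe : x = a *: z + w by rewrite /w addrC subrK.
have e1 : qf M x = qf N w - t0 * (x f 0) ^+ 2.
  by rewrite -(qNz a) -xe /N qf_pert addrK.
have e2 : qf N w = qf (row' f (col' f M)) ((Pm f)^T *m w).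
  by rewrite /N qf_pert wf expr0n mulr0 addr0 qf_minor Px_id.
rewrite e1 e2.
have [xf0|xf0] := eqVneq (x f 0) 0.
  have wx : w = x by rewrite /w /a xf0 mul0r scale0r subr0.
  rewrite xf0 expr0n mulr0 subr0 wx; apply: pm.
  by apply: contra x0 => /eqP H; rewrite -(Px_id xf0) H mulmx0.
have : 0 < (x f 0) ^+ 2 by rewrite exprn_even_gt0.
have := qf_ge0 ((Pm f)^T *m w) pm.
set q := qf _ _; set s := _ ^+ 2; move: t0lt; set t := t0 => h1 h2 h3.
nra.
Qed.


Lemma qfE k (M : 'M[R]_k) x : qf M x = \sum_j \sum_i x i 0 * M i j * x j 0.
Proof.
rewrite /qf mxE; apply: eq_bigr => j _; rewrite mxE mulr_suml.
by apply: eq_bigr => i _; rewrite mxE.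
Qed.

Lemma sum_split n (f : 'I_n) (F : 'I_n -> R) :
  \sum_(i < n) F i =
  \sum_(i < f) F (lo_idx i) + F f + \sum_(i < n - f.+1) F (hi_idx i).
Proof.
pose G (i : nat) := F (insubd f i).
have e : forall i : 'I_n, F i = G i.
  by move=> i; rewrite /G; congr F; apply: val_inj; rewrite val_insubd ltn_ord.
rewrite (eq_bigr (fun i : 'I_n => G i)); last by move=> i _; exact: e.
rewrite -(big_mkord xpredT G) (@big_cat_nat _ _ _ f 0 n) //=; last exact: ltnW.
rewrite (@big_cat_nat _ _ _ f.+1 f n) //= big_nat1 big_mkord.
rewrite addrA; congr (_ + _ + _).
- apply: eq_bigr => i _; rewrite /G; congr F; apply: val_inj.
  by rewrite val_insubd /= (lo_idx_proof i).
- by rewrite e.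
rewrite (_ : \sum_(f.+1 <= i < n) G i = \sum_(0 + f.+1 <= i < n) G i); last by rewrite add0n.
rewrite big_addn big_mkord; apply: eq_bigr => i _.
rewrite /G; congr F; apply: val_inj.
by rewrite val_insubd /= addnC (hi_idx_proof i).
Qed.

Lemma posdef_diag k (A : 'M[R]_k) a : posdef A -> 0 < A a a.
Proof.
move=> pA.
have nz : delta_mx a 0 != 0 :> 'cV[R]_k.
  by apply/eqP => /matrixP/(_ a 0); rewrite !mxE !eqxx /= => /eqP; rewrite oner_eq0.
have := pA _ nz; rewrite -/(qf _ _).
by rewrite /qf trmx_delta -rowE -colE !mxE.
Qed.

End Aux.

Theorem mainTheorem7 (R : realFieldType) (n : nat) (G : 'M[R]_n) (f : 'I_n)
  (d1 d2 r1 r2 : R) :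
  G^T = G ->
  G f f = 0 ->
  (forall i j : 'I_n, (i < f)%N -> (f < j)%N -> G i j = 0) ->
  simple_root_gram (sub_lo G f) d1 ->
  simple_root_gram (sub_hi G f) d2 ->
  0 < r1 -> r1 <= 1 / (2 * d1) ->
  0 < r2 -> r2 <= 1 / (2 * d2) ->
  0 < \det (mS G f r1 r2) ->
  posdef (mS G f r1 r2) /\ (forall i : 'I_n, mS G f r1 r2 i i <= 1).
Proof.
case: n G f => [|k] G f; first by case: f.
move=> GT Gff Gz [_ pd1 _ dg1 _] [_ pd2 _ dg2 _] r1p r1le r2p r2le dp.
set M := mS G f r1 r2.
have lo_f : forall a : 'I_f, (lo_idx a == f) = false.
  by move=> a; apply/negbTE; rewrite -val_eqE /=; have := ltn_ord a; lia.
have lo_le : forall a : 'I_f, (lo_idx a <= f)%N by move=> a /=; have := ltn_ord a; lia.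
have lo_ge : forall a : 'I_f, (f <= lo_idx a)%N = false.
  by move=> a /=; have := ltn_ord a; lia.
have hi_f : forall a : 'I_(k.+1 - f.+1), (hi_idx a == f) = false.
  by move=> a; apply/negbTE; rewrite -val_eqE /=; lia.
have hi_ge : forall a : 'I_(k.+1 - f.+1), (f <= hi_idx a)%N.
  by move=> a /=; lia.
have hi_le : forall a : 'I_(k.+1 - f.+1), (hi_idx a <= f)%N = false.
  by move=> a /=; lia.
have Mll : forall a b, M (lo_idx a) (lo_idx b) = r1 * sub_lo G f a b.
  by move=> a b; rewrite /M /mS !mxE lo_f lo_le lo_le.
have Mhh : forall a b, M (hi_idx a) (hi_idx b) = r2 * sub_hi G f a b.
  by move=> a b; rewrite /M /mS !mxE hi_f hi_le hi_ge hi_ge.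
have Mlh : forall (a : 'I_f) (b : 'I_(k.+1 - f.+1)), M (lo_idx a) (hi_idx b) = 0.
  by move=> a b; rewrite /M /mS !mxE lo_f hi_le lo_ge /= andbF.
have Mhl : forall (a : 'I_(k.+1 - f.+1)) (b : 'I_f), M (hi_idx a) (lo_idx b) = 0.
  by move=> a b; rewrite /M /mS !mxE hi_f hi_le lo_ge /= andbF.
have Mff : M f f = 1 by rewrite /M /mS !mxE eqxx.
split; last first.
  move=> i; case: (ltngtP i f) => hif.
  - have -> : i = lo_idx (Ordinal hif) by apply: val_inj.
    rewrite Mll.
    have g0 := posdef_diag (Ordinal hif) pd1.
    have g2 := dg1 (Ordinal hif).
    move: g0 g2 r1le; set g := sub_lo G f _ _ => g0 g2 r1le.
    have d0 : 0 < 2 * d1 by apply: lt_le_trans g2.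
    apply: le_trans (ler_wpM2r (ltW g0) r1le) _.
    by rewrite mul1r mulrC ler_pdivrMr // mul1r.
  - have hb : (i - f.+1 < k.+1 - f.+1)%N by have := ltn_ord i; lia.
    have -> : i = hi_idx (Ordinal hb) by apply: val_inj => /=; lia.
    rewrite Mhh.
    have g0 := posdef_diag (Ordinal hb) pd2.
    have g2 := dg2 (Ordinal hb).
    move: g0 g2 r2le; set g := sub_hi G f _ _ => g0 g2 r2le.
    have d0 : 0 < 2 * d2 by apply: lt_le_trans g2.
    apply: le_trans (ler_wpM2r (ltW g0) r2le) _.
    by rewrite mul1r mulrC ler_pdivrMr // mul1r.
  - have -> : i = f by apply: val_inj; exact: hif.
    by rewrite Mff.
have Gs : forall i j, G j i = G i j by move=> i j; rewrite -{1}GT mxE.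
have pos_x : forall x : 'cV[R]_k.+1, x f 0 = 0 -> x != 0 -> 0 < qf M x.
  move=> x xf x0.
  set xl := \col_a x (lo_idx a) 0 : 'cV[R]_f.
  set xh := \col_a x (hi_idx a) 0 : 'cV[R]_(k.+1 - f.+1).
  have E : qf M x = r1 * qf (sub_lo G f) xl + r2 * qf (sub_hi G f) xh.
    rewrite !qfE (sum_split f).
    rewrite [X in _ + X + _]big1 => [|i _]; last by rewrite xf mulr0.
    rewrite addr0 !mulr_sumr; congr (_ + _); apply: eq_bigr => a _.
    - rewrite (sum_split f) xf !mul0r addr0 [X in _ + X]big1 => [|b _]; last by rewrite Mhl mulr0 mul0r.
      rewrite addr0 mulr_sumr; apply: eq_bigr => b _; rewrite Mll !mxE; ring.
    - rewrite (sum_split f) xf !mul0r addr0 [X in X + _]big1 => [|b _]; last by rewrite Mlh mulr0 mul0r.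
      rewrite add0r mulr_sumr; apply: eq_bigr => b _; rewrite Mhh !mxE; ring.
  have q1 := qf_ge0 xl pd1; have q2 := qf_ge0 xh pd2.
  rewrite E.
  have [xl0|xl0] := eqVneq xl 0; last first.
    apply: (lt_le_trans (mulr_gt0 r1p (pd1 _ xl0))).
    by rewrite lerDl mulr_ge0 // ltW.
  have [xh0|xh0] := eqVneq xh 0; last first.
    apply: (lt_le_trans (mulr_gt0 r2p (pd2 _ xh0))).
    by rewrite lerDr mulr_ge0 // ltW.
  exfalso; move/eqP: x0; apply.
  apply/matrixP => i j; rewrite (ord1 j) [RHS]mxE.
  case: (ltngtP i f) => hif.
  - have e : lo_idx (Ordinal hif) = i by apply: val_inj.
    by have := congr1 (fun A : 'cV[R]_f => A (Ordinal hif) 0) xl0; rewrite !mxE e.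
  - have hb : (i - f.+1 < k.+1 - f.+1)%N by have := ltn_ord i; lia.
    have e : hi_idx (Ordinal hb) = i by apply: val_inj => /=; lia.
    by have := congr1 (fun A : 'cV[R]_(k.+1 - f.+1) => A (Ordinal hb) 0) xh0; rewrite !mxE e.
  - by have -> : i = f by apply: val_inj; exact: hif.
apply: (posdef_of_minor (f := f)).
- apply/matrixP => i j; rewrite /M /mS !mxE.
  by rewrite (andbC (j == f)) (andbC (j <= f)%N) (andbC (f <= j)%N) Gs.
- move=> y y0; rewrite -/(qf _ _) qf_minor.
  exact: pos_x (Py_f f y) (Py_neq0 f y0).
- exact: dp.
Qed.
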